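(* Let $K$ be a tropical aura and $R$ a positive aura with tempered growth. Then the lexicographic product $K[\times]R$ has tempered growth.
   Context: A halo is a commutative unital semiring with a partial order compatible with $+$ and $\cdot$; an aura is a halo whose semiring is a semifield; positive means $0<1$. A halo is tropical if it is not $\{0\}$, totally ordered, and $a+b=\max(a,b)$. For positive auras $R_1,R_2$, the lexicographic product $R_1[\times]R_2$ is $\{0\}\cup(R_1^\times\times R_2^\times)$ (with $0=(0,0)$, $R_i^\times=R_i\setminus\{0\}$), with componentwise operations and the lexicographic order (first coordinate most significant). A halo $R$ has tempered growth if for every non-zero $P\in\mathbb{N}[X]$ and $x\in R$, ($x^n\le P(n)$ for all $n\in\mathbb{N}$) implies $x\le1$, natural numbers being interpreted as sums of $1$. *)

(* Defs.v *)
From HB Require Import structures.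
From mathcomp Require Import all_boot all_algebra.
From Stdlib Require Import ClassicalEpsilon.

Set Implicit Arguments.
Unset Strict Implicit.
Unset Printing Implicit Defensive.

Record halo_ops := HaloOps {
  hcar :> Type;
  hzero : hcar;
  hone : hcar;
  hadd : hcar -> hcar -> hcar;
  hmul : hcar -> hcar -> hcar;
  hle : hcar -> hcar -> Prop
}.

Arguments hzero {_}.
Arguments hone {_}.
Arguments hadd {_}.
Arguments hmul {_}.
Arguments hle {_}.

Record halo := Halo {
  hops :> halo_ops;
  haddA : forall a b c : hops, hadd a (hadd b c) = hadd (hadd a b) c;
  haddC : forall a b : hops, hadd a b = hadd b a;
  hadd0 : forall a : hops, hadd hzero a = a;
  hmulA : forall a b c : hops, hmul a (hmul b c) = hmul (hmul a b) c;
  hmulC : forall a b : hops, hmul a b = hmul b a;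
  hmul1 : forall a : hops, hmul hone a = a;
  hmulDl : forall a b c : hops, hmul (hadd a b) c = hadd (hmul a c) (hmul b c);
  hmul0 : forall a : hops, hmul hzero a = hzero;
  hle_refl : forall a : hops, hle a a;
  hle_trans : forall a b c : hops, hle a b -> hle b c -> hle a c;
  hle_anti : forall a b : hops, hle a b -> hle b a -> a = b;
  hle_add : forall a b c : hops, hle a b -> hle (hadd a c) (hadd b c);
  hle_mul : forall a b c : hops, hle a b -> hle (hmul a c) (hmul b c)
}.

Definition hlt (R : halo_ops) (a b : R) : Prop := hle a b /\ a <> b.

(* aura = halo whose underlying semiring is a semifield *)
Definition is_semifield (R : halo) : Prop :=
  hzero <> hone :> R /\ forall x : R, x <> hzero -> exists y : R, hmul x y = hone.

Definition positive (R : halo_ops) : Prop := hlt (hzero : R) hone.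

Definition tropical (R : halo) : Prop :=
  (exists x : R, x <> hzero) /\
  (forall a b : R, hle a b \/ hle b a) /\
  (forall a b : R, (hle a b -> hadd a b = b) /\ (hle b a -> hadd a b = a)).

Definition hnat (R : halo_ops) (n : nat) : R := iter n (hadd hone) hzero.
Definition hpow (R : halo_ops) (x : R) (n : nat) : R := iter n (hmul x) hone.

Definition tempered_growth (R : halo_ops) : Prop :=
  forall (P : {poly nat}), (P != 0)%R -> forall x : R,
    (forall n : nat, hle (hpow x n) (hnat R (P.[n])%R)) -> hle x hone.

(* Lexicographic product K[x]R = {0} u (K^x * R^x) *)
Section Lex.
Variables K R : halo.

Definition lex_car : Type :=
  option {p : (K : Type) * (R : Type) | p.1 <> hzero /\ p.2 <> hzero}.

Definition lex_val (x : lex_car) : (K : Type) * (R : Type) :=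
  match x with None => (hzero, hzero) | Some p => proj1_sig p end.

(* the element of K[x]R denoted by a pair (used only on pairs that are
   either (0,0) or have both coordinates nonzero) *)
Definition lex_mk (p : (K : Type) * (R : Type)) : lex_car :=
  match excluded_middle_informative (p.1 <> hzero /\ p.2 <> hzero) with
  | left h => Some (exist _ p h)
  | right _ => None
  end.

Definition lex_add (x y : lex_car) : lex_car :=
  lex_mk (hadd (lex_val x).1 (lex_val y).1, hadd (lex_val x).2 (lex_val y).2).

Definition lex_mul (x y : lex_car) : lex_car :=
  lex_mk (hmul (lex_val x).1 (lex_val y).1, hmul (lex_val x).2 (lex_val y).2).

Definition lex_le (x y : lex_car) : Prop :=
  hlt (lex_val x).1 (lex_val y).1 \/
  ((lex_val x).1 = (lex_val y).1 /\ hle (lex_val x).2 (lex_val y).2).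

Definition lex_one : lex_car := lex_mk (hone, hone).

Definition lexprod : halo_ops :=
  @HaloOps lex_car None lex_one lex_add lex_mul lex_le.
End Lex.

(* Main.v *)
Require Import Defs.
From mathcomp Require Import all_boot all_algebra.
From Stdlib Require Import ClassicalEpsilon.
Set Implicit Arguments.
Unset Strict Implicit.

Section Aux.
Variables K R : halo.

Lemma lex_mk_val (p : (K : Type) * (R : Type)) :
  p.1 <> hzero /\ p.2 <> hzero -> lex_val (lex_mk p) = p.
Proof.
move=> h; rewrite /lex_mk; case: excluded_middle_informative => //.
Qed.

Lemma sf_mul_nz (S : halo) (a b : S) : is_semifield S ->
  a <> hzero -> b <> hzero -> hmul a b <> hzero.
Proof.
move=> [_ inv] ha hb hab; case: (inv a ha) => y hy; apply: hb.
have e : hmul y (hmul a b) = b.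
  by rewrite hmulA (hmulC y) hy hmul1.
by rewrite -e hab hmulC hmul0.
Qed.

Lemma hnat_ge0 (S : halo) : positive S -> forall m, hle hzero (hnat S m).
Proof.
move=> [h01 _]; elim=> [|m IH] /=; first exact: hle_refl.
apply: hle_trans IH _.
rewrite -{1}(hadd0 (hnat S m)); exact: hle_add.
Qed.

Lemma hnat_le_succ (S : halo) : positive S -> forall m,
  hle (hnat S m) (hnat S m.+1).
Proof.
move=> [h01 _] m /=; rewrite -{1}(hadd0 (hnat S m)); exact: hle_add.
Qed.

Lemma hnat_ge1 (S : halo) : positive S -> forall m,
  hle hone (hnat S m.+1).
Proof.
move=> hp m /=.
have := hle_add hone (hnat_ge0 hp m).
by rewrite hadd0 haddC.
Qed.

Lemma hnat_nz (S : halo) : positive S -> forall m, hnat S m.+1 <> hzero.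
Proof.
move=> hp m e; have := hnat_ge1 hp m; rewrite e => h.
case: hp => h01 n01; apply: n01; exact: hle_anti.
Qed.

Lemma trop_pos (S : halo) : tropical S -> hzero <> hone :> S -> hlt (hzero : S) hone.
Proof.
move=> [_ [tot mx]] n01; split=> //.
case: (tot hzero hone) => // h.
have := (mx hone hzero).1 h; rewrite haddC hadd0 => e; by rewrite e in n01.
Qed.

Lemma trop_le0 (S : halo) : tropical S -> forall b : S, hle b hzero -> b = hzero.
Proof.
move=> [_ [tot mx]] b h; have := (mx b hzero).1 h.
by rewrite haddC hadd0.
Qed.

Lemma lex_hnat_val : is_semifield K -> tropical K -> is_semifield R -> positive R ->
  forall m, lex_val (hnat (lexprod K R) m.+1) = (hone, hnat R m.+1).
Proof.
move=> [k01 _] tK [r01 _] pR.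
have k10 : hone <> hzero :> K by apply: not_eq_sym.
have r10 : hone <> hzero :> R by apply: not_eq_sym.
have o1 : lex_val (lex_one K R) = (hone, hone) by rewrite /lex_one lex_mk_val.
elim=> [|m IH].
  have -> : hnat (lexprod K R) 1 = lex_add (lex_one K R) None by [].
  rewrite /lex_add o1 /= !(haddC _ hzero) !hadd0 lex_mk_val //=.
have -> : hnat (lexprod K R) m.+2 = lex_add (lex_one K R) (hnat (lexprod K R) m.+1) by [].
rewrite /lex_add IH o1 /=.
have e11 : hadd hone hone = hone :> K by case: tK => _ [_ mx]; apply: (mx _ _).1; apply: hle_refl.
rewrite e11 lex_mk_val //=; split => //.
exact: (hnat_nz pR (m:=m.+1)).
Qed.

Lemma lex_hpow_val (sK : is_semifield K) (sR : is_semifield R)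
  (a : K) (r : R) (h : a <> hzero /\ r <> hzero) :
  forall n, lex_val (@hpow (lexprod K R) (Some (exist _ (a, r) h)) n) = (hpow a n, hpow r n)
   /\ hpow a n <> hzero /\ hpow r n <> hzero.
Proof.
case: (sK) => k01 _; case: (sR) => r01 _.
have k10 : hone <> hzero :> K by apply: not_eq_sym.
have r10 : hone <> hzero :> R by apply: not_eq_sym.
elim=> [|n [IH [na nr]]].
  by rewrite /= /lex_one lex_mk_val.
have -> : @hpow (lexprod K R) (Some (exist _ (a, r) h)) n.+1 =
   lex_mul (Some (exist _ (a, r) h)) (@hpow (lexprod K R) (Some (exist _ (a, r) h)) n) by [].
have pa : hmul a (hpow a n) <> hzero by apply: sf_mul_nz => //; case: (h).
have pr : hmul r (hpow r n) <> hzero by apply: sf_mul_nz => //; case: (h).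
rewrite /lex_mul IH lex_mk_val //=.
Qed.
End Aux.

Lemma hpow1 (S : halo) n : hpow (hone : S) n = hone.
Proof. elim: n => //= n ->; exact: hmul1. Qed.

Lemma hornP1 (P : {poly nat}) n : (P + 1).[n]%R = (P.[n]%R).+1.
Proof. by rewrite hornerD hornerC -addn1. Qed.

Theorem lemma1p34 (K R : halo) :
  is_semifield K -> tropical K ->
  is_semifield R -> positive R -> tempered_growth R ->
  tempered_growth (lexprod K R).
Proof.
move=> sK tK sR pR tR P P0 x Hx.
have k01 : hzero <> hone :> K by case: sK.
have r01 : hzero <> hone :> R by case: sR.
have k10 : hone <> hzero :> K by apply: not_eq_sym.
have r10 : hone <> hzero :> R by apply: not_eq_sym.
have o1 : lex_val (lex_one K R) = (hone, hone) by rewrite /lex_one lex_mk_val.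
have kpos := trop_pos tK k01.
rewrite /hle /= /lex_le o1 /=.
case: x Hx => [[[a r] h]|] Hx /=; last by left.
have key : forall n, exists k, P.[n]%R = k.+1 /\
   (hlt (hpow a n) hone \/ (hpow a n = hone /\ hle (hpow r n) (hnat R k.+1))).
  move=> n; have := Hx n; rewrite /hle /= /lex_le.
  have [-> [na nr]] := lex_hpow_val sK sR h n.
  case E: (P.[n])%R => [|k] /=.
    move=> [[hl _]|[e _]]; first by case: na; apply: trop_le0.
    by case: na.
  rewrite lex_hnat_val // => H; by exists k.
have [k [_ H1]] := key 1%N.
have ha : hpow a 1 = a by rewrite /= hmulC hmul1.
have hr : hpow r 1 = r by rewrite /= hmulC hmul1.
rewrite ha in H1; case: H1 => [H1|[ea _]]; first by left.
right; split => //.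
apply: (tR (P + 1)%R).
  apply/negP => /eqP E; have := hornP1 P 0; by rewrite E horner0.
move=> n; rewrite hornP1.
have [j [Ej Hj]] := key n.
rewrite ea hpow1 in Hj; case: Hj => [[_ ne]|[_ Hj]]; first by [].
rewrite Ej; exact: (hle_trans Hj (hnat_le_succ pR _)).
Qed.
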